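(* Suppose Assumption A and Assumption B (defined in the context) hold for the dynamic accuracy DFO algorithm described in the context, with criticality parameter $\epsilon>0$. Let $k_\epsilon$ be such that $\|\nabla f(\theta^k)\|\ge\epsilon$ for all $k=0,\ldots,k_\epsilon$ and $k_\epsilon+1$ is the first index $k$ with $\|\nabla f(\theta^k)\|<\epsilon$. Let $\mathcal{S}_\epsilon$ be the set of iterations $k\in\{0,\ldots,k_\epsilon\}$ which are successful, i.e. $\tilde\rho^k\ge\eta_2$, or $\tilde\rho^k\ge\eta_1$ and $m^k$ is fully linear in $B(\theta^k,\Delta^k)$. Then $$|\mathcal{S}_\epsilon|\le\frac{2(\kappa_{\rm eg}+1)f(\theta^0)}{(\eta_1-2\eta_1')\epsilon\Delta_{\min}}.$$
   Context: Setting. Let $n,d\ge 1$ and $r=(r_1,\ldots,r_n):\mathbb{R}^d\to\mathbb{R}^n$, with objective $f(\theta)=\frac1n\|r(\theta)\|^2=\frac1n\sum_{i=1}^n r_i(\theta)^2$ (Euclidean norm). In the application, $r_i(\theta)=\|\hat x_i(\theta)-x_i\|$ where $\hat x_i(\theta)$ is the minimizer of a lower-level problem that can only be computed approximately. The algorithm never sees $r$ exactly: for any $\theta$ it can compute an approximation $\tilde r(\theta)$ (in the application $\tilde r_i(\theta)=\|\tilde x_i(\theta)-x_i\|$ with $\tilde x_i(\theta)$ an approximate minimizer whose error can be made as small as desired), and sets $\tilde f(\theta)=\frac1n\|\tilde r(\theta)\|^2$. We say $\tilde f(\theta)$ is evaluated with accuracy $\delta$ if $|\tilde f(\theta)-f(\theta)|\le\delta$.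 Models. At iteration $k$ the algorithm holds an iterate $\theta^k$, a radius $\Delta^k>0$, and interpolation points $z^0=\theta^k,z^1,\ldots,z^d\in\mathbb{R}^d$ with $z^1-\theta^k,\ldots,z^d-\theta^k$ linearly independent; $J^k\in\mathbb{R}^{n\times d}$ is the unique matrix with $\tilde r(\theta^k)+J^k(z^t-\theta^k)=\tilde r(z^t)$ for $t=1,\ldots,d$. Set $M^k(s)=\tilde r(\theta^k)+J^k s$ and $m^k(s)=\frac1n\|M^k(s)\|^2=\tilde f(\theta^k)+(g^k)^Ts+\frac12 s^TH^ks$ with $g^k=\frac2n (J^k)^T\tilde r(\theta^k)$, $H^k=\frac2n(J^k)^TJ^k$. Fixed constants $\kappa_{\rm ef},\kappa_{\rm eg}>0$ (independent of $k,\theta^k,\Delta^k$) are given, and $m^k$ is called fully linear in $B(\theta^k,\Delta^k)$ if $|f(\theta^k+s)-m^k(s)|\le\kappa_{\rm ef}(\Delta^k)^2$ and $\|\nabla f(\theta^k+s)-\nabla m^k(s)\|\le\kappa_{\rm eg}\Delta^k$ for all $\|s\|\le\Delta^k$. The algorithm has a procedure which, by replacing interpolation points, makes the model fully linear in a given ball. Algorithm. Parameters: $\Delta_{\max}>0$, $0<\gamma_{\rm dec}<1<\gamma_{\rm inc}$, $0<\eta_1\le\eta_2<1$, $0<\eta_1'<\min(\eta_1,1-\eta_2)/2$, $\epsilon>0$; inputs $\theta^0\in\mathbb{R}^d$, $0<\Delta^0\le\Delta_{\max}$. Build an initial model $m^0$ from an arbitrary interpolation set. For $k=0,1,2,\ldots$: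 (1) [accuracy phase] repeat: (a) except on the first pass, re-evaluate $\tilde f(\theta^k)$ with accuracy $\delta^k\le\eta_1'[m^k(0)-m^k(s^k)]$ using the $s^k$ from the previous pass; (b) [criticality phase] if $\|g^k\|\le\epsilon$, replace $\Delta^k$ by $\gamma_{\rm dec}^i\Delta^k$ for $i=0,1,2,\ldots$ (making the model fully linear in the current ball) until $m^k$ is fully linear in $B(\theta^k,\Delta^k)$ and $\Delta^k\le\|g^k\|$; (c) compute $s^k$ with $\|s^k\|\le\Delta^k$ approximately minimizing $m^k$ over that ball; until $\tilde f(\theta^k)$ has been evaluated with accuracy $\delta^k\le\eta_1'[m^k(0)-m^k(s^k)]$. (2) Evaluate $\tilde f(\theta^k+s^k)$ with accuracy $\delta^k_+\le\eta_1'[m^k(0)-m^k(s^k)]$ and set $\tilde\rho^k=\frac{\tilde f(\theta^k)-\tilde f(\theta^k+s^k)}{m^k(0)-m^k(s^k)}$. (3) Set $\theta^{k+1}=\theta^k+s^k$ if $\tilde\rho^k\ge\eta_2$, or if $\tilde\rho^k\ge\eta_1$ and $m^k$ is fully linear in $B(\theta^k,\Delta^k)$; otherwise $\theta^{k+1}=\theta^k$. Set $\Delta^{k+1}=\min(\gamma_{\rm inc}\Delta^k,\Delta_{\max})$ if $\tilde\rho^k\ge\eta_2$; $\Delta^{k+1}=\Delta^k$ if $\tilde\rho^k<\eta_2$ and $m^k$ is not fully linear in $B(\theta^k,\Delta^k)$; $\Delta^{k+1}=\gamma_{\rm dec}\Delta^k$ otherwise. (4) If $\theta^{k+1}=\theta^k+s^k$,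 form $m^{k+1}$ by adding $\theta^{k+1}$ to the interpolation set (removing an existing point); otherwise set $m^{k+1}=m^k$ if $m^k$ is fully linear in $B(\theta^k,\Delta^k)$, else form $m^{k+1}$ by making $m^k$ fully linear in $B(\theta^{k+1},\Delta^{k+1})$. Assumption A: the set $\mathcal{B}=\{z: \|z-\theta\|\le\Delta_{\max}\text{ for some }\theta\text{ with }f(\theta)\le f(\theta^0)\}$ is bounded, and $r$ is continuously differentiable on $\mathcal{B}$ with $\partial r$ Lipschitz continuous with constant $L_J$ on $\mathcal{B}$. Assumption B: for all $k$, $m^k(0)-m^k(s^k)\ge\frac12\|g^k\|\min\left(\Delta^k,\frac{\|g^k\|}{\|H^k\|+1}\right)$, and there is $\kappa_H\ge1$ with $\|H^k\|+1\le\kappa_H$ for all $k$. Constants: $c_0:=\min\left(\frac{1-\eta_2-2\eta_1'}{4\kappa_{\rm ef}},\frac{1}{\kappa_H}\right)$ and $\Delta_{\min}:=\gamma_{\rm dec}\min\left(\Delta^0,\frac{c_0\epsilon}{\kappa_{\rm eg}+1},\frac{\gamma_{\rm dec}\epsilon}{\kappa_{\rm eg}+1}\right)$. *)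

(* Defs.v *)
From HB Require Import structures.
From mathcomp Require Import all_boot all_order all_algebra.
From mathcomp Require Import all_classical all_reals all_analysis.
Set Implicit Arguments. Unset Strict Implicit. Unset Printing Implicit Defensive.
Import Order.TTheory GRing.Theory Num.Theory.
Import numFieldNormedType.Exports.
Local Open Scope classical_set_scope.
Local Open Scope ring_scope.

Section DFO.
Variable R : realType.

Definition enorm (m : nat) (v : 'cV[R]_m) : R :=
  Num.sqrt (\sum_(i < m) v i 0 ^+ 2).

Definition opnorm (p q : nat) (A : 'M[R]_(p, q)) : R :=
  sup [set enorm (A *m v) | v in [set v : 'cV[R]_q | enorm v = 1]].

(* Objective f(theta) = 1/n ||r(theta)||^2 (also used for ftilde with rtilde). *)
Definition obj (n d : nat) (r : 'cV[R]_d -> 'cV[R]_n) (th : 'cV[R]_d) : R :=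
  n%:R^-1 * enorm (r th) ^+ 2.

Definition grad (d : nat) (f : 'cV[R]_d -> R) (x : 'cV[R]_d) : 'cV[R]_d :=
  \col_(i < d) ('d f x (delta_mx i 0 : 'cV[R]_d)).

Definition jac (n d : nat) (r : 'cV[R]_d -> 'cV[R]_n) (x : 'cV[R]_d)
  : 'M[R]_(n, d) :=
  \matrix_(i < n, j < d) ('d r x (delta_mx j 0 : 'cV[R]_d)) i 0.

(* The Gauss-Newton type model built from rt = rtilde(theta^k) and J = J^k:
   M(s) = rt + J s,  m(s) = 1/n ||M(s)||^2,
   g = 2/n J^T rt,  H = 2/n J^T J,  grad m(s) = g + H s. *)
Definition mdl (n d : nat) (rt : 'cV[R]_n) (J : 'M[R]_(n, d)) (s : 'cV[R]_d) : R :=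
  n%:R^-1 * enorm (rt + J *m s) ^+ 2.
Definition gmdl (n d : nat) (rt : 'cV[R]_n) (J : 'M[R]_(n, d)) : 'cV[R]_d :=
  (2 / n%:R) *: (J^T *m rt).
Definition Hmdl (n d : nat) (J : 'M[R]_(n, d)) : 'M[R]_d :=
  (2 / n%:R) *: (J^T *m J).
Definition grad_mdl (n d : nat) (rt : 'cV[R]_n) (J : 'M[R]_(n, d))
  (s : 'cV[R]_d) : 'cV[R]_d :=
  gmdl rt J + Hmdl J *m s.

Definition fully_linear (n d : nat) (r : 'cV[R]_d -> 'cV[R]_n)
  (kef keg : R) (rt : 'cV[R]_n) (J : 'M[R]_(n, d)) (th : 'cV[R]_d) (D : R)
  : Prop :=
  forall s : 'cV[R]_d, enorm s <= D ->
    `|obj r (th + s) - mdl rt J s| <= kef * D ^+ 2 /\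
    enorm (grad (obj r) (th + s) - grad_mdl rt J s) <= keg * D.

Definition interpolates (n d : nat) (rt : 'cV[R]_n) (J : 'M[R]_(n, d))
  (th : 'cV[R]_d) : Prop :=
  exists (z : 'I_d -> 'cV[R]_d) (rz : 'I_d -> 'cV[R]_n),
    (\matrix_(i < d, t < d) (z t - th) i 0) \in unitmx /\
    forall t, rt + J *m (z t - th) = rz t.

Record dfo_params := DfoParams {
  Dmax : R; gdec : R; ginc : R; eta1 : R; eta2 : R; eta1' : R; eps : R;
  kef : R; keg : R }.

Definition params_ok (P : dfo_params) : Prop :=
  0 < Dmax P /\ 0 < gdec P < 1 /\ 1 < ginc P /\
  0 < eta1 P /\ eta1 P <= eta2 P /\ eta2 P < 1 /\
  0 < eta1' P /\ eta1' P < Num.min (eta1 P) (1 - eta2 P) / 2 /\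
  0 < eps P /\ 0 < kef P /\ 0 < keg P.

Section Run.
Variables (n d : nat) (r : 'cV[R]_d -> 'cV[R]_n) (P : dfo_params).

(* A run of the algorithm, recorded by the state at the END of the accuracy
   phase (step 1) of each iteration k:
   th k   = theta^k,
   D0 k   = the radius Delta^k with which iteration k starts (set by step 3
            of iteration k-1, or Delta^0),
   D k    = the radius Delta^k after the criticality phase(s),
   rt k   = rtilde(theta^k) (final evaluation), so ftilde(theta^k) = m^k(0),
   J k    = J^k (final model),
   s k    = s^k,
   fp k   = ftilde(theta^k + s^k) computed in step 2. *)
Record dfo_trace := DfoTrace {
  th : nat -> 'cV[R]_d; D0 : nat -> R; D : nat -> R;
  rt : nat -> 'cV[R]_n; J : nat -> 'M[R]_(n, d);
  s : nat -> 'cV[R]_d; fp : nat -> R }.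

Variable T : dfo_trace.

Definition mk (k : nat) (x : 'cV[R]_d) : R := mdl (rt T k) (J T k) x.
Definition gk (k : nat) : 'cV[R]_d := gmdl (rt T k) (J T k).
Definition Hk (k : nat) : 'M[R]_d := Hmdl (J T k).
Definition pred_decr (k : nat) : R := mk k 0 - mk k (s T k).
Definition rho (k : nat) : R := (mk k 0 - fp T k) / pred_decr k.
Definition FL (k : nat) : Prop :=
  fully_linear r (kef P) (keg P) (rt T k) (J T k) (th T k) (D T k).
Definition successful (k : nat) : Prop :=
  eta2 P <= rho k \/ (eta1 P <= rho k /\ FL k).

Definition dfo_run (th0 : 'cV[R]_d) (Delta0 : R) : Prop :=
  th T 0 = th0 /\ D0 T 0 = Delta0 /\
  forall k,
      interpolates (rt T k) (J T k) (th T k) /\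
      (* criticality phase: each reduction of the radius by gdec happened
         because, after making the model fully linear in the current ball,
         its gradient norm was <= eps and < current radius *)
      (exists i : nat, D T k = gdec P ^+ i * D0 T k /\
         forall j, (j < i)%N ->
           exists (rt' : 'cV[R]_n) (J' : 'M[R]_(n, d)),
             fully_linear r (kef P) (keg P) rt' J' (th T k) (gdec P ^+ j * D0 T k)
             /\ enorm (gmdl rt' J') <= eps P
             /\ enorm (gmdl rt' J') < gdec P ^+ j * D0 T k) /\
      (* termination of the criticality phase (last pass) *)
      (enorm (gk k) <= eps P -> FL k /\ D T k <= enorm (gk k)) /\
      enorm (s T k) <= D T k /\
      `|mk k 0 - obj r (th T k)| <= eta1' P * pred_decr k /\
      `|fp T k - obj r (th T k + s T k)| <= eta1' P * pred_decr k /\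
      th T k.+1 = (if `[< successful k >] then th T k + s T k else th T k) /\
      D0 T k.+1 = (if eta2 P <= rho k then Num.min (ginc P * D T k) (Dmax P)
                   else if ~~ `[< FL k >] then D T k
                   else gdec P * D T k).

Definition assumptionA (th0 : 'cV[R]_d) (LJ : R) : Prop :=
  let Bset := [set z : 'cV[R]_d | exists t : 'cV[R]_d,
                 obj r t <= obj r th0 /\ enorm (z - t) <= Dmax P] in
  (exists M : R, forall z, Bset z -> enorm z <= M) /\
  (forall z, Bset z -> differentiable r z) /\
  (forall z1 z2, Bset z1 -> Bset z2 ->
     opnorm (jac r z1 - jac r z2) <= LJ * enorm (z1 - z2)).

Definition assumptionB (kH : R) : Prop :=
  (forall k, pred_decr k >= 2^-1 * enorm (gk k) *
       Num.min (D T k) (enorm (gk k) / (opnorm (Hk k) + 1))) /\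
  1 <= kH /\ (forall k, opnorm (Hk k) + 1 <= kH).

End Run.

Definition c0 (P : dfo_params) (kH : R) : R :=
  Num.min ((1 - eta2 P - 2 * eta1' P) / (4 * kef P)) (kH^-1).

Definition Dmin (P : dfo_params) (kH Delta0 : R) : R :=
  gdec P * Num.min Delta0 (Num.min (c0 P kH * eps P / (keg P + 1))
                                   (gdec P * eps P / (keg P + 1))).

End DFO.

(* Main.v *)
Require Import Defs.
From HB Require Import structures.
From mathcomp Require Import all_boot all_order all_algebra.
From mathcomp Require Import all_classical all_reals all_analysis.
From mathcomp Require Import ring lra.
Import Order.TTheory GRing.Theory Num.Theory.
Import numFieldNormedType.Exports.
Local Open Scope ring_scope.


Lemma cs_sum (R : realType) (m : nat) (x y : 'I_m -> R) :
  (\sum_i x i * y i) ^+ 2 <= (\sum_i x i ^+ 2) * (\sum_i y i ^+ 2).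
Proof.
have H0 : 0 <= \sum_i \sum_j (x i * y j - x j * y i) ^+ 2.
  by apply: sumr_ge0 => i _; apply: sumr_ge0 => j _; exact: sqr_ge0.
have E : \sum_i \sum_j (x i * y j - x j * y i) ^+ 2 =
  \sum_i \sum_j (x i ^+ 2 * y j ^+ 2) + \sum_i \sum_j (x j ^+ 2 * y i ^+ 2)
  - 2 * \sum_i \sum_j ((x i * y i) * (x j * y j)).
  rewrite -big_split mulr_sumr -sumrB /=; apply: eq_bigr => i _.
  rewrite -big_split mulr_sumr -sumrB /=; apply: eq_bigr => j _. ring.
have E1 : \sum_i \sum_j (x i ^+ 2 * y j ^+ 2) = (\sum_i x i ^+ 2) * (\sum_i y i ^+ 2).
  by rewrite mulr_suml; apply: eq_bigr => i _; rewrite mulr_sumr.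
have E2 : \sum_i \sum_j (x j ^+ 2 * y i ^+ 2) = (\sum_i x i ^+ 2) * (\sum_i y i ^+ 2).
  by rewrite exchange_big.
have E3 : \sum_i \sum_j ((x i * y i) * (x j * y j)) = (\sum_i x i * y i) ^+ 2.
  by rewrite expr2 mulr_suml; apply: eq_bigr => i _; rewrite mulr_sumr.
move: H0; rewrite E E1 E2 E3; lra.
Qed.

Lemma enorm_ge0 (R : realType) m (v : 'cV[R]_m) : 0 <= enorm v.
Proof. exact: sqrtr_ge0. Qed.

Lemma enorm0 (R : realType) m : enorm (0 : 'cV[R]_m) = 0.
Proof. by rewrite /enorm big1 ?sqrtr0 // => i _; rewrite mxE expr0n. Qed.

Lemma enormD (R : realType) m (a b : 'cV[R]_m) : enorm (a + b) <= enorm a + enorm b.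
Proof.
rewrite /enorm.
set Sa := \sum_i a i 0 ^+ 2; set Sb := \sum_i b i 0 ^+ 2.
have Sa0 : 0 <= Sa by apply: sumr_ge0 => i _; exact: sqr_ge0.
have Sb0 : 0 <= Sb by apply: sumr_ge0 => i _; exact: sqr_ge0.
set Sab := \sum_i a i 0 * b i 0.
have E : \sum_i (a + b) i 0 ^+ 2 = Sa + 2 * Sab + Sb.
  rewrite /Sa /Sab /Sb mulr_sumr -!big_split /=; apply: eq_bigr => i _.
  rewrite mxE; ring.
have cs : Sab <= Num.sqrt Sa * Num.sqrt Sb.
  rewrite -sqrtrM //; apply: le_trans (ler_norm Sab) _.
  rewrite -sqrtr_sqr; apply: ler_wsqrtr; exact: cs_sum.
rewrite E -[X in _ <= X]ger0_norm; last by rewrite addr_ge0 // sqrtr_ge0.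
rewrite -sqrtr_sqr; apply: ler_wsqrtr.
rewrite sqrrD !sqr_sqrtr //; lra.
Qed.

Lemma enorm_tri (R : realType) m (a b : 'cV[R]_m) : enorm a <= enorm (a - b) + enorm b.
Proof. by have := @enormD R m (a - b) b; rewrite subrK. Qed.

Lemma opnorm_ge0 (R : realType) p q (A : 'M[R]_(p, q)) : 0 <= opnorm A.
Proof.
rewrite /opnorm; set E := (X in sup X).
have [hs|nhs] := pselect (has_sup E); last by rewrite sup_out.
case: (hs) => [[e Ee] _]; apply: le_trans (sup_upper_bound hs Ee).
by case: Ee => v _ <-; exact: enorm_ge0.
Qed.
Arguments enorm_ge0 {R m}.
Arguments enorm0 {R m}.
Arguments enormD {R m}.
Arguments enorm_tri {R m}.
Arguments opnorm_ge0 {R p q}.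

Theorem proposition1 (R : realType) (n d : nat) (r : 'cV[R]_d -> 'cV[R]_n)
  (P : dfo_params R) (th0 : 'cV[R]_d) (Delta0 LJ kH : R)
  (T : dfo_trace R n d) (keps : nat) :
  (1 <= n)%N -> (1 <= d)%N ->
  params_ok P -> 0 < Delta0 -> Delta0 <= Dmax P ->
  dfo_run r P T th0 Delta0 ->
  assumptionA r P th0 LJ ->
  assumptionB T kH ->
  (forall k, (k <= keps)%N -> eps P <= enorm (grad (obj r) (th T k))) ->
  enorm (grad (obj r) (th T keps.+1)) < eps P ->
  (#|[set k : 'I_keps.+1 | `[< successful r P T k >]]|)%:R
    <= 2 * (keg P + 1) * obj r th0
       / ((eta1 P - 2 * eta1' P) * eps P * Dmin P kH Delta0).
Proof.
move=> _ _ Pok D0pos D0max run _ [Bdec [kH1 kHb]] gradk _.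
case: Pok => [Dmax0 [/andP[gd0 gd1] [ginc1 [e10 [e12 [e21 [e1'0 [e1'lt [eps0 [kef0 keg0]]]]]]]]]].
case: run => [th0E [D00 run]].
have e1'1 : eta1' P < eta1 P / 2.
  apply: lt_le_trans e1'lt _; rewrite ler_pM2r ?invr_gt0 // ge_min lexx //.
have e1'2 : eta1' P < (1 - eta2 P) / 2.
  apply: lt_le_trans e1'lt _; rewrite ler_pM2r ?invr_gt0 // ge_min lexx orbT //.
have kp : 0 < keg P + 1 by lra.
set epsk := eps P / (keg P + 1).
have epsk0 : 0 < epsk by rewrite divr_gt0.
have kH0 : 0 < kH by lra.
have c00 : 0 < c0 P kH.
  rewrite lt_min invr_gt0 kH0 andbT divr_gt0 //; lra.
have c0a : c0 P kH <= kH^-1 by rewrite ge_min lexx orbT.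
have c0b : c0 P kH * (4 * kef P) <= 1 - eta2 P - 2 * eta1' P.
  rewrite -ler_pdivlMr; last lra.
  by rewrite ge_min lexx.
have c0c : c0 P kH * kH <= 1 by rewrite -ler_pdivlMr // div1r.
set a := Num.min Delta0 (Num.min (c0 P kH * epsk) (gdec P * epsk)).
have Dm : Dmin P kH Delta0 = gdec P * a by rewrite /Dmin /a /epsk !mulrA.
have a0 : 0 < a.
  by rewrite !lt_min D0pos /=; apply/andP; split; apply: mulr_gt0.
have aD0 : a <= Delta0 by rewrite ge_min lexx.
have ac : a <= c0 P kH * epsk by rewrite /a !ge_min lexx orbT.
have ag : a <= gdec P * epsk by rewrite /a !ge_min lexx !orbT.
have ga : gdec P * a <= a by rewrite ger_pMl //; lra.
have Dmin0 : 0 < Dmin P kH Delta0 by rewrite Dm mulr_gt0.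
have gklb : forall k, (k <= keps)%N -> 0 <= D T k -> epsk <= enorm (gk T k).
  move=> k hk hD.
  have [_ [_ [critend _]]] := run k.
  rewrite /epsk ler_pdivrMr //.
  have G0 := enorm_ge0 (gk T k).
  have [hle|hlt] := leP (enorm (gk T k)) (eps P).
  - have [FLk Dle] := critend hle.
    have [|_ Hg] := FLk 0; first by rewrite enorm0.
    move: Hg; rewrite addr0 /grad_mdl mulmx0 addr0 => Hg.
    change (gmdl (rt T k) (J T k)) with (gk T k) in Hg.
    have := enorm_tri (grad (obj r) (th T k)) (gk T k).
    have := gradk k hk.
    have : keg P * D T k <= keg P * enorm (gk T k) by apply: ler_wpM2l; clear -keg0 Dle; lra.
    clear -Hg; lra.
  - have : 0 <= enorm (gk T k) * keg P by rewrite mulr_ge0 //; clear -keg0; lra.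
    clear -hlt; lra.
have crit : forall k, (k <= keps)%N -> Num.min (D0 T k) (gdec P * epsk) <= D T k.
  move=> k hk; have [_ [[i [Di crit]] _]] := run k.
  case: i Di crit => [|j] Di crit.
    by rewrite Di expr0 mul1r ge_min lexx.
  have [rt' [J' [FL' [_ glt]]]] := crit j (ltnSn j).
  set rj := gdec P ^+ j * D0 T k in FL' glt.
  have g0 := enorm_ge0 (gmdl rt' J').
  have [|_ Hg] := FL' 0; first by rewrite enorm0; clear -g0 glt; lra.
  move: Hg; rewrite addr0 /grad_mdl mulmx0 addr0 => Hg.
  have := enorm_tri (grad (obj r) (th T k)) (gmdl rt' J').
  have := gradk k hk.
  have Drj : D T k = gdec P * rj by rewrite Di exprS -mulrA.
  move=> h1 h2; rewrite ge_min; apply/orP; right.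
  rewrite Drj; apply: ler_wpM2l; first by clear -gd0; lra.
  rewrite /epsk ler_pdivrMr //; clear -h1 h2 Hg glt; lra.
have veryS : forall k, FL r P T k -> 0 < D T k ->
    D T k <= c0 P kH * enorm (gk T k) -> eta2 P <= rho T k.
  move=> k FLk Dp Dle.
  have [_ [_ [_ [sk [acc0 [accp _]]]]]] := run k.
  have Bk := Bdec k; have hb := kHb k; have h0 := opnorm_ge0 (Hk T k).
  set G := enorm (gk T k) in Dle Bk.
  set h := opnorm (Hk T k) + 1 in Bk hb.
  have G0 : 0 <= G := enorm_ge0 _.
  have Dh : D T k <= G / h.
    rewrite ler_pdivlMr; last by rewrite /h; clear -h0; lra.
    have f1 : D T k * h <= D T k * kH by apply: ler_wpM2l; clear -Dp hb; lra.
    have f2 : D T k * kH <= c0 P kH * G * kH by apply: ler_wpM2r; clear -kH0 Dle; lra.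
    have f3 : c0 P kH * kH * G <= 1 * G by apply: ler_wpM2r; clear -G0 c0c; lra.
    clear -f1 f2 f3; lra.
  rewrite (min_l Dh) in Bk.
  have Gp : 0 < G.
    have : 0 < c0 P kH * G by clear -Dp Dle; lra.
    by rewrite pmulr_rgt0.
  set p := pred_decr T k in Bk acc0 accp *.
  have pp : 0 < p.
    have : 0 < 2^-1 * G * D T k by rewrite !mulr_gt0 // ?invr_gt0.
    clear -Bk; lra.
  have q2 : kef P * (D T k * D T k) <= kef P * (D T k * (c0 P kH * G)).
    by apply: ler_wpM2l; [clear -kef0; lra| apply: ler_wpM2l; clear -Dp Dle; lra].
  have q3 : (kef P * c0 P kH) * (2^-1 * G * D T k) <= (kef P * c0 P kH) * p.
    by apply: ler_wpM2l; [apply: mulr_ge0; clear -kef0 c00; lra | clear -Bk; lra].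
  have q4 : (c0 P kH * (4 * kef P)) * p <= (1 - eta2 P - 2 * eta1' P) * p.
    by apply: ler_wpM2r; clear -pp c0b; lra.
  have [Hf _] := FLk (s T k) sk.
  change (mdl (rt T k) (J T k) (s T k)) with (mk T k (s T k)) in Hf.
  rewrite expr2 in Hf.
  move: Hf accp; rewrite !ler_norml => /andP[hf1 hf2] /andP[ap1 ap2].
  have pdE : p = mk T k 0 - mk T k (s T k) by [].
  rewrite /rho -/p ler_pdivlMr //.
  have : 0 <= (1 - eta2 P) * p by rewrite mulr_ge0 //; clear -e21 pp; lra.
  clear -q2 q3 q4 hf1 hf2 ap1 ap2 pdE pp e1'0; lra.
have Dlb_of : forall k, (k <= keps)%N -> Dmin P kH Delta0 <= D0 T k ->
    Dmin P kH Delta0 <= D T k.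
  move=> k hk h; apply: le_trans (crit k hk).
  rewrite le_min h /= Dm; clear -ga ag; lra.
have D0lb : forall k, (k <= keps)%N -> Dmin P kH Delta0 <= D0 T k.
  elim=> [|k IH] hk.
    rewrite D00 Dm; clear -ga aD0; lra.
  have hk' : (k <= keps)%N := ltnW hk.
  have Dk := Dlb_of k hk' (IH hk').
  have Dp : 0 < D T k by clear -Dk Dmin0; lra.
  have Gl := gklb k hk' (ltW Dp).
  have [_ [_ [_ [_ [_ [_ [_ D0up]]]]]]] := run k.
  rewrite D0up.
  case: ifP => h2.
    rewrite le_min; apply/andP; split.
      have : D T k <= ginc P * D T k by rewrite ler_peMl; clear -Dp ginc1; lra.
      clear -Dk; lra.
    rewrite Dm; clear -ga aD0 D0max; lra.
  case: ifP => hfl; first by clear -Dk; lra.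
  move/negbFE/asboolP: hfl => FLk.
  have : c0 P kH * epsk <= D T k.
    rewrite leNgt; apply/negP => hlt.
    have : eta2 P <= rho T k.
      apply: veryS FLk Dp _.
      have : c0 P kH * epsk <= c0 P kH * enorm (gk T k) by apply: ler_wpM2l; clear -c00 Gl; lra.
      clear -hlt; lra.
    by rewrite h2.
  move=> hc; rewrite Dm; apply: ler_wpM2l; clear -gd0 hc ac; lra.
have Dlb : forall k, (k <= keps)%N -> Dmin P kH Delta0 <= D T k.
  by move=> k hk; apply: Dlb_of hk (D0lb k hk).
set cst := (eta1 P - 2 * eta1' P) / 2 * epsk * Dmin P kH Delta0.
have dec : forall k, (k <= keps)%N ->
    (if `[< successful r P T k >] then cst else 0)
      <= obj r (th T k) - obj r (th T k.+1).
  move=> k hk.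
  have [_ [_ [_ [sk [acc0 [accp [thup _]]]]]]] := run k.
  rewrite thup; case: ifP => hs; last by rewrite subrr.
  have Dk := Dlb k hk.
  have Gl := gklb k hk (ltW (lt_le_trans Dmin0 Dk)).
  have Bk := Bdec k; have hb := kHb k; have h0 := opnorm_ge0 (Hk T k).
  set G := enorm (gk T k) in Gl Bk.
  set h := opnorm (Hk T k) + 1 in Bk hb.
  have mlb : Dmin P kH Delta0 <= Num.min (D T k) (G / h).
    rewrite le_min Dk /= ler_pdivlMr; last by rewrite /h; clear -h0; lra.
    have f1 : Dmin P kH Delta0 * h <= Dmin P kH Delta0 * kH by apply: ler_wpM2l; clear -Dmin0 hb; lra.
    have f2 : Dmin P kH Delta0 * kH <= (c0 P kH * epsk) * kH by apply: ler_wpM2r; clear -kH0 Dm ga ac; lra.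
    have f3 : (c0 P kH * kH) * epsk <= 1 * epsk by apply: ler_wpM2r; clear -epsk0 c0c; lra.
    clear -f1 f2 f3 Gl; lra.
  have pb : (2^-1 * epsk) * Dmin P kH Delta0 <= (2^-1 * G) * Num.min (D T k) (G / h).
    apply: ler_pM; clear -epsk0 Dmin0 Gl mlb; lra.
  set p := pred_decr T k in Bk acc0 accp *.
  have pp : 0 < p.
    have : 0 < 2^-1 * epsk * Dmin P kH Delta0.
      by apply: mulr_gt0 => //; apply: mulr_gt0 => //; rewrite invr_gt0.
    clear -Bk pb; lra.
  have hr : eta1 P <= rho T k.
    move/asboolP: hs => [h1|[h1 _]]; clear -h1 e12; lra.
  move: hr; rewrite /rho -/p ler_pdivlMr // => hr.
  move: acc0 accp; rewrite !ler_norml => /andP[a1 a2] /andP[ap1 ap2].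
  have : (eta1 P - 2 * eta1' P) * (2^-1 * epsk * Dmin P kH Delta0)
           <= (eta1 P - 2 * eta1' P) * p.
    by apply: ler_wpM2l; clear -Bk pb e1'1; lra.
  rewrite /cst; clear -hr a1 a2 ap1 ap2; lra.
have obj0 : forall x, 0 <= obj r x.
  by move=> x; rewrite /obj mulr_ge0 // ?invr_ge0 ?ler0n ?sqr_ge0.
have tel : forall N, \sum_(k < N) (obj r (th T k) - obj r (th T k.+1))
    = obj r (th T 0) - obj r (th T N).
  elim=> [|N IH]; first by rewrite big_ord0 subrr.
  by rewrite big_ord_recr /= IH addrA subrK.
have cardE : (#|[set k : 'I_keps.+1 | `[< successful r P T k >]]|)%:R
    = \sum_(k < keps.+1) (if `[< successful r P T k >] then 1 else 0) :> R.
  rewrite -sum1_card natr_sum big_mkcond /=; apply: eq_bigr => k _.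
  by rewrite inE; case: ifP.
have sumle : (#|[set k : 'I_keps.+1 | `[< successful r P T k >]]|)%:R * cst
    <= obj r th0.
  rewrite cardE mulr_suml.
  apply: le_trans (_ : \sum_(k < keps.+1) (obj r (th T k) - obj r (th T k.+1)) <= _).
    apply: ler_sum => k _.
    have := dec k (ltn_ord k).
    by case: ifP => _; rewrite ?mul1r ?mul0r.
  rewrite tel th0E; have := obj0 (th T keps.+1); clear; lra.
have den0 : 0 < (eta1 P - 2 * eta1' P) * eps P * Dmin P kH Delta0.
  apply: mulr_gt0 => //; apply: mulr_gt0 => //; clear -e1'1; lra.
rewrite ler_pdivlMr //.
set C := (#|_|)%:R in sumle *.
have -> : C * ((eta1 P - 2 * eta1' P) * eps P * Dmin P kH Delta0)
    = 2 * (keg P + 1) * (C * cst).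
  rewrite /cst /epsk; field; exact: lt0r_neq0.
apply: ler_wpM2l => //; clear -kp; lra.
Qed.
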